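(* Fix a real $\alpha>4$. Let $A$ be the event that there exists a line $\ell$ of $Q$ not containing $x$ with $|\ell\cap U|\ge\lceil\log s\rceil$. Then $\mathbb{P}(A)\to 0$ as $s\to\infty$, uniformly over all locally sparse generalized quadrangles $Q$ of order $(s,t)$ with $t\ge s(\log s)^{2\alpha}$ and all points $x$ of $Q$.
   Context: A generalized quadrangle of order $(s,t)$ (with $s,t\ge 2$) is a point-line incidence structure in which every point lies on $t+1$ lines, every line contains $s+1$ points, two distinct points lie on at most one common line, and for every point $x$ and line $\ell$ with $x\notin\ell$ there is a unique point $x'\in\ell$ and a unique line $\ell'$ with $x,x'\in\ell'$. The quadrangle is locally sparse if for every set of three points, the number of points collinear with all three is at most $s+1$. Let $\mathcal{P}$ be the point set. For a point $u$, $u^{\perp}$ is the set of points collinear with $u$ (including $u$). For $R\subseteq\mathcal{P}$, $R^{\bowtie}=\bigcup_{y\in R}y^{\perp}$. Logarithms are natural. Random construction: fix $\alpha>4$ and a point $x$. Define $p$ by $ps=(s\log t-\alpha s\log\log s)/t$. Independently for each of the $t+1$ lines $\ell$ through $x$, with probability $ps$ the line is chosen, and on each chosen line one point of $\ell\setminus\{x\}$ is selected uniformly at random (independently). Let $S$ be the set of selected points and $U=\mathcal{P}\setminus(S\cup\{x\})^{\bowtie}$. *)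

(* Defs.v *)
From Stdlib Require Import Reals ZArith.
From mathcomp Require Import all_boot.

Set Implicit Arguments.
Unset Strict Implicit.
Unset Printing Implicit Defensive.

Section GQ.
Variables (P L : finType) (I : P -> L -> bool).

Record is_GQ (s t : nat) : Prop := {
  gq_s : (2 <= s)%N;
  gq_t : (2 <= t)%N;
  gq_pt : forall p : P, #|[set l : L | I p l]| = t.+1;
  gq_ln : forall l : L, #|[set p : P | I p l]| = s.+1;
  gq_two : forall p q : P, p != q -> (#|[set l : L | I p l && I q l]| <= 1)%N;
  gq_ax : forall (x : P) (l : L), ~~ I x l ->
    #|[set pr : P * L | [&& I pr.1 l, I x pr.2 & I pr.1 pr.2]]| = 1
}.

Definition perp (u : P) : {set P} :=
  [set q : P | (q == u) || [exists l : L, I u l && I q l]].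

Definition bowtie (R : {set P}) : {set P} := \bigcup_(y in R) perp y.

Definition locally_sparse (s : nat) : Prop :=
  forall a b c : P, a != b -> a != c -> b != c ->
    (#|perp a :&: perp b :&: perp c| <= s.+1)%N.

Local Open Scope R_scope.

(* the number p*s of the paper *)
Definition ps (alpha : R) (s t : nat) : R :=
  (INR s * ln (INR t) - alpha * INR s * ln (ln (INR s))) / INR t.

(* Outcome space: omega : {ffun L -> option P}; omega l = Some y means line l
   (through x) was chosen and y selected on it; None means l not chosen.
   Probability of a single line outcome: *)
Definition line_weight (alpha : R) (s t : nat) (x : P) (l : L) (o : option P) : R :=
  if I x l then
    match o with
    | None => 1 - ps alpha s t
    | Some y => if I y l && (y != x) then ps alpha s t / INR s else 0
    end
  else
    match o with None => 1 | Some _ => 0 end.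

Definition outcome_prob (alpha : R) (s t : nat) (x : P) (w : {ffun L -> option P}) : R :=
  \big[Rmult/R1]_(l : L) line_weight alpha s t x l (w l).

Definition selected (w : {ffun L -> option P}) : {set P} :=
  [set y : P | [exists l : L, w l == Some y]].

Definition Uset (x : P) (w : {ffun L -> option P}) : {set P} :=
  ~: bowtie (x |: selected w).

Definition Rceil (r : R) : Z := (- Int_part (- r))%Z.

Definition eventA (s : nat) (x : P) (w : {ffun L -> option P}) : bool :=
  [exists l : L, ~~ I x l &&
     (Z.of_nat #|[set u in Uset x w | I u l]| >=? Rceil (ln (INR s)))%Z].

Definition probA (alpha : R) (s t : nat) (x : P) : R :=
  \big[Rplus/R0]_(w : {ffun L -> option P})
     (if eventA s x w then outcome_prob alpha s t x w else 0).

End GQ.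

(* Main.v *)
Require Import Defs.
From Stdlib Require Import Reals ZArith Lra Lia.
From mathcomp Require Import all_boot.
From mathcomp Require Import Rstruct zify.
Local Open Scope R_scope.

Unset Implicit Arguments.

Lemma big_opt (T : finType) (B : pred (option T)) (F : option T -> R) :
  \big[Rplus/R0]_(o | B o) F o =
  Rplus (if B None then F None else R0) (\big[Rplus/R0]_(y | B (Some y)) F (Some y)).
Proof.
rewrite /index_enum !unlock /= Finite.enum.unlock /=.
set e := isFinite.enum_subdef _.
have -> : reducebig R0 [seq Some i | i <- e] (fun o => BigBody o Rplus (B o) (F o)) = reducebig R0 e (fun y => BigBody y Rplus (B (Some y)) (F (Some y))).
  by elim: e => //= a e ->.
case: (B None) => //=; lra.
Qed.

Section RSums.
Variable T : finType.

Lemma sum_ge0 (Q : pred T) (F : T -> R) :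
  (forall i, Q i -> 0 <= F i) -> 0 <= \big[Rplus/R0]_(i | Q i) F i.
Proof. move=> H; apply: (big_ind (fun v => 0 <= v)) => //; [lra| move=> a b; lra]. Qed.

Lemma sum_le (Q : pred T) (F G : T -> R) :
  (forall i, Q i -> F i <= G i) ->
  \big[Rplus/R0]_(i | Q i) F i <= \big[Rplus/R0]_(i | Q i) G i.
Proof. move=> H; apply: (big_ind2 (fun a b => a <= b)) => //; [lra| move=> a b c d; lra]. Qed.

Lemma sum_sub_le (Q Q' : pred T) (F : T -> R) :
  (forall i, Q i -> Q' i) -> (forall i, Q' i -> 0 <= F i) ->
  \big[Rplus/R0]_(i | Q i) F i <= \big[Rplus/R0]_(i | Q' i) F i.
Proof.
move=> HQ H0.
rewrite [X in _ <= X](bigID Q) /=.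
have -> : \big[Rplus/R0]_(i | Q' i && Q i) F i = \big[Rplus/R0]_(i | Q i) F i.
  apply: eq_bigl => i; case: (boolP (Q i)) => Qi; [by rewrite HQ | by rewrite andbF].
have : 0 <= \big[Rplus/R0]_(i | Q' i && ~~ Q i) F i.
  by apply: sum_ge0 => i /andP [] /H0.
rewrite /=; lra.
Qed.

Lemma sum_term_le (Q : pred T) (F : T -> R) j :
  Q j -> (forall i, Q i -> 0 <= F i) -> F j <= \big[Rplus/R0]_(i | Q i) F i.
Proof.
move=> Qj H0; rewrite (bigD1 j) //=.
have : 0 <= \big[Rplus/R0]_(i | Q i && (i != j)) F i.
  by apply: sum_ge0 => i /andP [] /H0.
lra.
Qed.

Lemma iter_plus n c : iter n (Rplus c) R0 = INR n * c.
Proof. elim: n => [|n IH]; first by rewrite /=; lra. rewrite iterS IH S_INR; lra. Qed.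

Lemma sum_const (Q : pred T) c :
  \big[Rplus/R0]_(i | Q i) c = INR #|[set i | Q i]| * c.
Proof. by rewrite big_const iter_plus cardsE. Qed.

Lemma prod_le (Q : pred T) (F G : T -> R) :
  (forall i, Q i -> 0 <= F i <= G i) ->
  \big[Rmult/R1]_(i | Q i) F i <= \big[Rmult/R1]_(i | Q i) G i.
Proof.
move=> H.
have : 0 <= \big[Rmult/R1]_(i | Q i) F i <= \big[Rmult/R1]_(i | Q i) G i.
  apply: (big_ind2 (fun a b => 0 <= a <= b)) => //; first lra.
  move=> a b c d [h1 h2] [h3 h4]; split; first by apply: Rmult_le_pos.
  apply: Rmult_le_compat => //.
by case.
Qed.

Lemma prod_ge0 (Q : pred T) (F : T -> R) :
  (forall i, Q i -> 0 <= F i) -> 0 <= \big[Rmult/R1]_(i | Q i) F i.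
Proof. move=> H; apply: (big_ind (fun v => 0 <= v)) => //; [lra| move=> a b; apply: Rmult_le_pos]. Qed.

Lemma prod_ite (C : pred T) e :
  \big[Rmult/R1]_i (if C i then e else 1) = e ^ #|[set i | C i]|.
Proof.
rewrite -big_mkcond /= big_const cardsE.
elim: #|_| => [|n IH] //=; rewrite IH //.
Qed.

End RSums.

Lemma exp_le x y : x <= y -> exp x <= exp y.
Proof. case/Rle_lt_or_eq_dec => [h|->]; [left; exact: exp_increasing | right; done]. Qed.

Lemma ln_le x y : 0 < x -> x <= y -> ln x <= ln y.
Proof. move=> hx; case/Rle_lt_or_eq_dec => [h|->]; [left; exact: ln_increasing | right; done]. Qed.

Lemma INR_expn n k : INR (n ^ k)%N = INR n ^ k.
Proof. elim: k => [|k IH]; first by rewrite expn0. by rewrite expnS mult_INR IH. Qed.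


Set Implicit Arguments. Unset Strict Implicit.

Section Geo.
Variables (P L : finType) (I : P -> L -> bool) (s t : nat).
Hypothesis gq : is_GQ I s t.

Lemma perpP u v : reflect (v = u \/ exists l, I u l && I v l) (v \in perp I u).
Proof.
rewrite inE; apply: (iffP orP) => [[/eqP -> | /existsP [l H]] | [-> | [l H]]]; 
  [by left | by right; exists l | by left | by right; apply/existsP; exists l].
Qed.

Lemma ax_uniq (y : P) (l : L) pr1 pr2 : ~~ I y l ->
  [&& I pr1.1 l, I y pr1.2 & I pr1.1 pr1.2] ->
  [&& I pr2.1 l, I y pr2.2 & I pr2.1 pr2.2] -> pr1 = pr2.
Proof.
move=> Hy H1 H2; have /eqP /cards1P [pr0 Hpr] := gq_ax gq Hy.
have : pr1 \in [set pr0] by rewrite -Hpr inE.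
have : pr2 \in [set pr0] by rewrite -Hpr inE.
by rewrite !inE => /eqP -> /eqP ->.
Qed.

Lemma ax_ex (y : P) (l : L) : ~~ I y l ->
  exists pr : P * L, [&& I pr.1 l, I y pr.2 & I pr.1 pr.2].
Proof.
move=> Hy; have /eqP /cards1P [pr0 Hpr] := gq_ax gq Hy.
exists pr0; have : pr0 \in [set pr0] by rewrite inE.
by rewrite -Hpr inE.
Qed.

Lemma proj_uniq x l m y u u' :
  I x m -> (forall z, ~~ (I z m && I z l)) ->
  I u l -> I u' l -> u \notin perp I x -> u' \notin perp I x ->
  I y m -> u \in perp I y -> u' \in perp I y -> u = u'.
Proof.
move=> Hxm Hno Hul Hu'l Hux Hu'x Hym /perpP [Huy | [n /andP [Hyn Hun]]].
  by subst; case/negP: Hux; apply/perpP; right; exists m; rewrite Hxm.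
move=> /perpP [Huy | [n' /andP [Hyn' Hun']]].
  by subst; case/negP: Hu'x; apply/perpP; right; exists m; rewrite Hxm.
have Hyl : ~~ I y l by apply/negP => Hyl; move: (Hno y); rewrite Hym Hyl.
have := @ax_uniq y l (u, n) (u', n') Hyl.
by rewrite /= Hul Hyn Hun Hu'l Hyn' Hun' => /(_ isT isT) [].
Qed.


Lemma bad_lines x l : ~~ I x l ->
  (#|[set m | I x m && [exists z, I z m && I z l]]| <= 1)%N.
Proof.
move=> Hxl; apply/card_le1_eqP => m1 m2; rewrite !inE.
move=> /andP [H1 /existsP [z1 /andP [Hz1m Hz1l]]] /andP [H2 /existsP [z2 /andP [Hz2m Hz2l]]].
have := @ax_uniq x l (z1, m1) (z2, m2) Hxl.
by rewrite /= H1 H2 Hz1m Hz1l Hz2m Hz2l => /(_ isT isT) [].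
Qed.

Lemma good_lines x l : ~~ I x l ->
  (t <= #|[set m | I x m && ~~ [exists z, I z m && I z l]]|)%N.
Proof.
move=> Hxl; have := @bad_lines x l Hxl; have := gq_pt gq x.
rewrite -(cardsID [set m | [exists z, I z m && I z l]] [set m | I x m]).
have -> : [set m | I x m] :&: [set m | [exists z, I z m && I z l]] = [set m | I x m && [exists z, I z m && I z l]].
  by apply/setP => m; rewrite !inE.
have -> : [set m | I x m] :\: [set m | [exists z, I z m && I z l]] = [set m | I x m && ~~ [exists z, I z m && I z l]].
  by apply/setP => m; rewrite !inE andbC.
lia.
Qed.

Lemma card_line_minus x m : I x m -> #|[set y | I y m && (y != x)]| = s.
Proof.
move=> Hxm; have := gq_ln gq m.
have -> : [set p | I p m] = x |: [set y | I y m && (y != x)].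
  by apply/setP => y; rewrite !inE; case: eqP => [-> | _]; rewrite ?Hxm ?orbF ?andbT /=.
by rewrite cardsU1 !inE eqxx andbF /= => [[]].
Qed.

End Geo.


Set Implicit Arguments. Unset Strict Implicit.

Lemma div_ge0 a b : 0 <= a -> 0 < b -> 0 <= a / b.
Proof. move=> ha hb; unfold Rdiv; apply: Rmult_le_pos => //; left; apply: Rinv_0_lt_compat; done. Qed.

Section W.
Variables (P L : finType) (I : P -> L -> bool) (s t : nat) (x : P) (alpha : R).
Hypothesis gq : is_GQ I s t.

Lemma proj_count l m (k0 : nat) (f : 'I_k0 -> P) :
  I x m -> (forall z, ~~ (I z m && I z l)) -> injective f ->
  (forall i, I (f i) l && (f i \notin perp I x)) ->
  (#|[set y | I y m && (y != x) && [forall i, f i \notin perp I y]]| + k0 <= s)%N.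
Proof.
move=> Hxm Hno finj Hf.
set A := [set y | I y m && (y != x)].
set Bd := [set y | [exists i, f i \in perp I y]].
have HA : #|A| = s by exact: (card_line_minus gq Hxm).
have HID := cardsID Bd A.
have H1 : (#|[set y | I y m && (y != x) && [forall i, f i \notin perp I y]]| <= #|A :\: Bd|)%N.
  apply: subset_leq_card; apply/subsetP => y; rewrite !inE => /andP [/andP [-> ->] /forallP H].
  rewrite andbT /= andbT; apply/negP => /existsP [i Hi]; by move: (H i); rewrite Hi.
pose proj i := odflt x [pick y | I y m && (f i \in perp I y)].
have Hpick : forall i, I (proj i) m && (f i \in perp I (proj i)).
  move=> i; rewrite /proj; case: pickP => [y Hy | H] //=.
  have Hfm : ~~ I (f i) m.
    apply/negP => Hfm; move: (Hf i) => /andP [_ /negP]; apply; apply/perpP; right; exists m.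
    by rewrite Hxm Hfm.
  have [[y n] /and3P [/= Hym Hfn Hyn]] := ax_ex gq Hfm.
  move: (H y); rewrite Hym /=; move/negP; case; apply/perpP; right; exists n; by rewrite Hyn Hfn.
have Hproj_ne : forall i, proj i != x.
  move=> i; apply/negP => /eqP Hpx; move: (Hpick i); rewrite Hpx => /andP [_ Hp].
  by move: (Hf i) => /andP [_]; rewrite Hp.
have proj_inj : injective proj.
  move=> i j Hij; apply: finj.
  move: (Hf i) (Hf j) (Hpick i) (Hpick j) => /andP [Hil Hix] /andP [Hjl Hjx] /andP [Hm Hi] /andP [_ Hj].
  rewrite -Hij in Hj.
  exact: (proj_uniq gq Hxm Hno Hil Hjl Hix Hjx Hm Hi Hj).
have H2 : (k0 <= #|A :&: Bd|)%N.
  have -> : k0 = #|proj @: [set: 'I_k0]|.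
    by rewrite card_imset // cardsT card_ord.
  apply: subset_leq_card; apply/subsetP => y /imsetP [i _ ->].
  rewrite !inE Hproj_ne andbT; move: (Hpick i) => /andP [-> Hi] /=.
  by apply/existsP; exists i.
lia.
Qed.

Local Notation p := (ps alpha s t).
Hypotheses (hp0 : 0 <= p) (hp1 : p <= 1).

Lemma INR_s_pos : 0 < INR s.
Proof. apply: lt_0_INR; apply/ltP; have := gq_s gq; lia. Qed.

Lemma w_ge0 l o : 0 <= line_weight I alpha s t x l o.
Proof.
have hs := INR_s_pos.
rewrite /line_weight; case: (I x l); case: o => [y|] //; try lra.
case: ifP => _; last lra.
apply: div_ge0 => //.
Qed.

Lemma sum_ite_const (Q C : pred P) c :
  \big[Rplus/R0]_(y | Q y) (if C y then c else 0) = INR #|[set y | Q y && C y]| * c.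
Proof.
rewrite -sum_const big_mkcondr /=.
by apply: eq_bigr.
Qed.

Lemma sumB_le1 l (B : pred (option P)) :
  \big[Rplus/R0]_(o | B o) line_weight I alpha s t x l o <= 1.
Proof.
have hs := INR_s_pos.
rewrite big_opt /line_weight; case Hxl: (I x l).
  rewrite sum_ite_const.
  have Hc : (#|[set y | B (Some y) && (I y l && (y != x))]| <= s)%N.
    rewrite -(card_line_minus gq Hxl); apply: subset_leq_card; apply/subsetP => y.
    by rewrite !inE => /andP [_ ->].
  have Hc' : INR #|[set y | B (Some y) && (I y l && (y != x))]| <= INR s by apply: le_INR; apply/leP.
  have : INR #|[set y | B (Some y) && (I y l && (y != x))]| * (p / INR s) <= p.
    apply: (Rle_trans _ (INR s * (p / INR s))).
      apply: Rmult_le_compat_r => //; apply: div_ge0 => //.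
    right; field; lra.
  case: (B None); lra.
rewrite big1 //; case: (B None); lra.
Qed.

Lemma sumB_good l (B : pred (option P)) k0 : I x l ->
  (#|[set y | I y l && (y != x) && B (Some y)]| + k0 <= s)%N ->
  \big[Rplus/R0]_(o | B o) line_weight I alpha s t x l o <= 1 - INR k0 * p / INR s.
Proof.
have hs := INR_s_pos.
move=> Hxl Hc; rewrite big_opt /line_weight Hxl sum_ite_const.
have -> : [set y | B (Some y) && (I y l && (y != x))] = [set y | I y l && (y != x) && B (Some y)].
  by apply/setP => y; rewrite !inE andbC.
have Hc' : INR #|[set y | I y l && (y != x) && B (Some y)]| + INR k0 <= INR s.
  rewrite -plus_INR; apply: le_INR; apply/leP; done.
have : INR #|[set y | I y l && (y != x) && B (Some y)]| * (p / INR s) <= (INR s - INR k0) * (p / INR s).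
  apply: Rmult_le_compat_r; [apply: div_ge0 => // | lra].
have -> : (INR s - INR k0) * (p / INR s) = p - INR k0 * p / INR s by field; lra.
case: (B None); lra.
Qed.

End W.


Set Implicit Arguments. Unset Strict Implicit.

Lemma pow_mono_le1 e n m : 0 <= e <= 1 -> (n <= m)%N -> e ^ m <= e ^ n.
Proof.
move=> He /subnKC <-; elim: (m - n)%N => [|d IH]; first by rewrite addn0; lra.
rewrite addnS /=.
have : 0 <= e ^ (n + d) by apply: pow_le; lra.
move: IH; set a := e ^ (n + d); move=> IH Ha.
have : e * a <= 1 * a by apply: Rmult_le_compat_r; lra.
lra.
Qed.

Section Prob.
Variables (P L : finType) (I : P -> L -> bool) (s t : nat) (x : P) (alpha : R).
Hypothesis gq : is_GQ I s t.
Local Notation p := (ps alpha s t).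
Hypotheses (hp0 : 0 <= p) (hp1 : p <= 1).
Variable k : nat.

Definition Bl l := [set u | I u l && (u \notin perp I x)].
Definition Tup l (f : {ffun 'I_k -> P}) := injectiveb f && [forall i, f i \in Bl l].
Definition Bm (f : {ffun 'I_k -> P}) (m : L) : pred (option P) :=
  [pred o | if o is Some y then [forall i, f i \notin perp I y] else true].

Lemma U_perpx (om : {ffun L -> option P}) u : u \in Uset I x om -> u \notin perp I x.
Proof.
rewrite /Uset inE; apply: contra => Hu; apply/bigcupP; exists x => //; by rewrite !inE eqxx.
Qed.

Lemma U_sel (om : {ffun L -> option P}) u m y :
  u \in Uset I x om -> om m = Some y -> u \notin perp I y.
Proof.
move=> Hu Hm; move: Hu; rewrite /Uset inE; apply: contra => Hu; apply/bigcupP; exists y => //.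
rewrite !inE; apply/orP; right; apply/existsP; exists m; by rewrite Hm.
Qed.

Lemma op_ge0 om : 0 <= outcome_prob I alpha s t x om.
Proof. apply: prod_ge0 => l _; exact: w_ge0. Qed.

Lemma event_bound_f l (f : {ffun 'I_k -> P}) : ~~ I x l -> Tup l f ->
  \big[Rplus/R0]_(om : {ffun L -> option P})
     (if [forall i, f i \in Uset I x om] then outcome_prob I alpha s t x om else 0)
  <= exp (- (INR k * p / INR s)) ^ t.
Proof.
move=> Hxl /andP [/injectiveP finj /forallP Hf].
have hs := INR_s_pos gq.
rewrite -big_mkcond /=.
apply: (Rle_trans _ (\big[Rplus/R0]_(om in family (Bm f)) outcome_prob I alpha s t x om)).
  apply: sum_sub_le; last by move=> om _; apply: op_ge0.
  move=> om /forallP HU; apply/familyP => m; rewrite inE.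
  case Hm: (om m) => [y|] //; apply/forallP => i; exact: (U_sel (HU i) Hm).
rewrite /outcome_prob -(bigA_distr_big_dep _ (fun m o => line_weight I alpha s t x m o)).
set e := exp (- (INR k * p / INR s)).
have He0 : 0 < e by apply: exp_pos.
have He1 : e <= 1.
  rewrite /e -exp_0; apply: exp_le.
  have : 0 <= INR k * p / INR s by apply: div_ge0 => //; apply: Rmult_le_pos => //; apply: pos_INR.
  lra.
apply: (Rle_trans _ (\big[Rmult/R1]_m (if I x m && ~~ [exists z, I z m && I z l] then e else 1))).
  apply: prod_le => m _; split.
    apply: sum_ge0 => o _; exact: w_ge0.
  case: ifP => [/andP [Hxm /existsPn Hno] | _]; last exact: (sumB_le1 x gq hp0 hp1).
  apply: (Rle_trans _ (1 - INR k * p / INR s)).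
    apply: (sumB_good gq hp0 hp1) => //.
    have -> : [set y | I y m && (y != x) && (Some y \in Bm f m)] = [set y | I y m && (y != x) && [forall i, f i \notin perp I y]].
      by apply/setP => y; rewrite !inE.
    apply: (proj_count gq) => //.
    by move=> i; move: (Hf i); rewrite inE.
  have := exp_ineq1_le (- (INR k * p / INR s)); rewrite /e; lra.
rewrite prod_ite; apply: pow_mono_le1; first lra.
exact: (good_lines gq).
Qed.

Hypothesis Hk : k = Z.to_nat (Rceil (ln (INR s))).

Lemma probA_bound :
  probA I alpha s t x <= INR #|L| * (INR s.+1 ^ k * exp (- (INR k * p / INR s)) ^ t).
Proof.
have hs := INR_s_pos gq.
rewrite /probA.
set E := exp (- (INR k * p / INR s)) ^ t.
set G := fun om (f : {ffun 'I_k -> P}) =>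
  if [forall i, f i \in Uset I x om] then outcome_prob I alpha s t x om else 0.
have G0 : forall om f, 0 <= G om f.
  move=> om f; rewrite /G; case: ifP => _; [exact: op_ge0 | lra].
apply: (Rle_trans _ (\big[Rplus/R0]_om \big[Rplus/R0]_(l | ~~ I x l)
          \big[Rplus/R0]_(f | Tup l f) G om f)).
  apply: sum_le => om _.
  case: ifP => [HA | _]; last by apply: sum_ge0 => l _; apply: sum_ge0 => f _.
  move/existsP: HA => [l /andP [Hxl HZ]].
  set S := [set u in Uset I x om | I u l].
  have Hk' : (k <= #|S|)%N.
    apply/leP; move: HZ; rewrite Hk => /Z.geb_le HZ.
    rewrite /S; lia.
  pose f := [ffun i : 'I_k => enum_val (A := S) (widen_ord Hk' i)].
  have Hfi : forall i, f i \in S by move=> i; rewrite ffunE; apply: enum_valP.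
  have HfU : [forall i, f i \in Uset I x om].
    by apply/forallP => i; move: (Hfi i); rewrite inE => /andP [].
  have Tf : Tup l f.
    apply/andP; split.
      apply/injectiveP => i j; rewrite !ffunE => /enum_val_inj Hij.
      by apply: val_inj; move: Hij => /(congr1 val).
    apply/forallP => i; move: (Hfi i); rewrite inE => /andP [HU Hl].
    by rewrite /Bl inE Hl (U_perpx HU).
  apply: (Rle_trans _ (\big[Rplus/R0]_(f | Tup l f) G om f)); last first.
    apply: (@sum_term_le _ _ _ l) => // l' _; by apply: sum_ge0 => f' _.
  apply: (Rle_trans _ (G om f)); last by apply: (@sum_term_le _ _ _ f).
  by rewrite /G HfU; right.
rewrite exchange_big.
apply: (Rle_trans _ (\big[Rplus/R0]_(l | ~~ I x l) (INR s.+1 ^ k * E))).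
  apply: sum_le => l Hxl.
  rewrite exchange_big.
  apply: (Rle_trans _ (\big[Rplus/R0]_(f | Tup l f) E)).
    apply: sum_le => f Tf.
    have H := event_bound_f Hxl Tf; rewrite /G; exact: H.
  rewrite sum_const.
  have HE : 0 <= E by apply: pow_le; left; apply: exp_pos.
  apply: Rmult_le_compat_r => //.
  have Hc : (#|[set f | Tup l f]| <= #|Bl l| ^ k)%N.
    have Hcf := @card_ffun_on 'I_k P (Bl l); rewrite card_ord in Hcf; rewrite -Hcf.
    apply: subset_leq_card.
    apply/subsetP => f; rewrite inE => /andP [_ /forallP Hf]; apply/ffun_onP => i; exact: Hf.
  have Hb : (#|Bl l| <= s.+1)%N.
    rewrite -(gq_ln gq l); apply: subset_leq_card; apply/subsetP => u; rewrite !inE => /andP [-> _] //.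
  apply: (Rle_trans _ (INR (#|Bl l| ^ k))); first by apply: le_INR; apply/leP.
  rewrite INR_expn; apply: pow_incr; split; [apply: pos_INR | apply: le_INR; apply/leP; done].
apply: (Rle_trans _ (\big[Rplus/R0]_(l | true) (INR s.+1 ^ k * E))).
  apply: sum_sub_le => // l _; apply: Rmult_le_pos; [apply: pow_le; apply: pos_INR | apply: pow_le; left; apply: exp_pos].
rewrite sum_const; right; congr (INR _ * _).
by rewrite -cardsT; congr #|_|; apply/setP => l; rewrite !inE.
Qed.

End Prob.


Set Implicit Arguments. Unset Strict Implicit.

Lemma card_bigcup_le (T J : finType) (A : {set J}) (F : J -> {set T}) :
  (#|\bigcup_(i in A) F i| <= \sum_(i in A) #|F i|)%N.
Proof.
apply: (@big_ind2 {set T} nat (fun (S : {set T}) (n : nat) => (#|S| <= n)%N)) => //; first by rewrite cards0.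
move=> S1 n1 S2 n2 h1 h2; rewrite cardsU; lia.
Qed.

Section Count.
Variables (P L : finType) (I : P -> L -> bool) (s t : nat) (x : P).
Hypothesis gq : is_GQ I s t.

Lemma cardP_bound : (#|P| <= s.+1 * (t.+1 * s.+1))%N.
Proof.
have : (0 < #|[set l | I x l]|)%N by rewrite (gq_pt gq).
move=> /card_gt0P [m0]; rewrite inE => Hxm0.
have Hsub : [set: P] \subset \bigcup_(y in [set y | I y m0]) \bigcup_(n in [set n | I y n]) [set u | I u n].
  apply/subsetP => u _; case Hum: (I u m0).
    apply/bigcupP; exists u; first by rewrite inE.
    apply/bigcupP; exists m0; by rewrite inE.
  have [[y n] /and3P [/= Hym Hun Hyn]] := ax_ex gq (negbT Hum).
  apply/bigcupP; exists y; first by rewrite inE.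
  apply/bigcupP; exists n; by rewrite inE.
rewrite -cardsT; apply: (leq_trans (subset_leq_card Hsub)).
apply: (leq_trans (card_bigcup_le _ _)).
apply: (@leq_trans (\sum_(y in [set y | I y m0]) (t.+1 * s.+1))%N).
  apply: leq_sum => y _; apply: (leq_trans (card_bigcup_le _ _)).
  rewrite (eq_bigr (fun _ => s.+1)); last by move=> n _; rewrite (gq_ln gq).
  by rewrite sum_nat_const (gq_pt gq).
by rewrite sum_nat_const (gq_ln gq).
Qed.

Lemma cardL_bound : (#|L| <= #|P| * t.+1)%N.
Proof.
have Hsub : [set: L] \subset \bigcup_(u in [set: P]) [set l | I u l].
  apply/subsetP => l _.
  have : (0 < #|[set p | I p l]|)%N by rewrite (gq_ln gq).
  move=> /card_gt0P [u]; rewrite inE => Hul.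
  apply/bigcupP; exists u; by rewrite inE.
rewrite -cardsT; apply: (leq_trans (subset_leq_card Hsub)).
apply: (leq_trans (card_bigcup_le _ _)).
rewrite (eq_bigr (fun _ => t.+1)); last by move=> u _; rewrite (gq_pt gq).
by rewrite sum_nat_const cardsT.
Qed.

End Count.


Unset Implicit Arguments.

Lemma ceil_ge a : 0 < a -> a <= INR (Z.to_nat (Rceil a)).
Proof.
move=> ha; rewrite /Rceil.
have [h1 _] := base_Int_part (- a).
set z := Int_part (- a) in h1 *.
have hz : (z < 0)%Z by apply: lt_IZR; lra.
rewrite INR_IZR_INZ Z2Nat.id; last lia.
rewrite opp_IZR; lra.
Qed.

Lemma exp_pow u n : exp u ^ n = exp (INR n * u).
Proof.
elim: n => [|n IH]; first by rewrite /= Rmult_0_l exp_0.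
rewrite -[exp u ^ n.+1]/(exp u * exp u ^ n) IH S_INR -exp_plus; congr exp; ring.
Qed.

Lemma ln2_lt1 : ln 2 < 1.
Proof.
have h := exp_ineq1 1 ltac:(lra).
have -> : (1:R) = ln (exp 1) by rewrite ln_exp.
apply: ln_increasing; lra.
Qed.

Lemma exp3_le27 : exp 3 <= 27.
Proof.
have -> : 3 = 1 + 1 + 1 by ring.
rewrite !exp_plus; have h := exp_le_3; have h0 := exp_pos 1.
have : exp 1 * exp 1 <= 3 * 3 by apply: Rmult_le_compat; lra.
move=> h2; have : exp 1 * exp 1 * exp 1 <= (3 * 3) * 3.
  apply: Rmult_le_compat => //; try lra; apply: Rmult_le_pos; lra.
lra.
Qed.

Lemma ln_half_le r : 0 < r -> ln r <= r / 2.
Proof.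
move=> hr.
have h := exp_ineq1_le (ln (r / 2)).
rewrite exp_ln in h; last lra.
have e : ln (r / 2) = ln r - ln 2.
  rewrite /Rdiv ln_mult; [rewrite ln_Rinv; lra| lra | apply: Rinv_0_lt_compat; lra].
have := ln2_lt1; lra.
Qed.

Theorem mainTheorem3 (alpha : R) (halpha : 4 < alpha) :
  forall eps : R, 0 < eps ->
  exists S0 : nat,
    forall (s t : nat) (P L : finType) (I : P -> L -> bool) (x : P),
      (S0 <= s)%N ->
      is_GQ I s t ->
      locally_sparse I s ->
      INR s * Rpower (ln (INR s)) (2 * alpha) <= INR t ->
      probA I alpha s t x < eps.
Proof.
move=> eps heps.
set A0 := Rmax 27 ((48 - ln (eps / 16)) / 7 + 1).
have hA27 : 27 <= A0 by apply: Rmax_l.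
have hA1 : (48 - ln (eps / 16)) / 7 + 1 <= A0 by apply: Rmax_r.
exists (Z.to_nat (up (exp A0))).
move=> s t P L I x Hs gq _ Ht.
have [hup _] := archimed (exp A0).
have hupp : (0 < up (exp A0))%Z by apply: lt_IZR; have := exp_pos A0; lra.
have hS0 : exp A0 <= INR s.
  apply: (Rle_trans _ (INR (Z.to_nat (up (exp A0))))).
    rewrite INR_IZR_INZ Z2Nat.id; [lra | lia].
  apply: le_INR; apply/leP; exact: Hs.
set S := INR s in hS0 Ht *.
set T := INR t in Ht *.
have hSpos : 0 < S by have := exp_pos A0; lra.
set a := ln S in Ht *.
have ha : A0 <= a by rewrite -(ln_exp A0); apply: ln_le => //; apply: exp_pos.
have ha27 : 27 <= a by lra.
set b := ln a in Ht *.
have hb : 3 <= b.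
  rewrite -(ln_exp 3); apply: ln_le; first by apply: exp_pos.
  have := exp3_le27; lra.
have hRp : Rpower a (2 * alpha) = exp (2 * alpha * b) by [].
rewrite hRp in Ht.
have hE1 : 0 < exp (2 * alpha * b) by apply: exp_pos.
have hTpos : 0 < T by have := Rmult_lt_0_compat _ _ hSpos hE1; lra.
set r := T / S.
have hTr : T = S * r by rewrite /r; field; lra.
have hr : exp (2 * alpha * b) <= r.
  rewrite /r; apply: (Rmult_le_reg_l S) => //; rewrite -hTr; lra.
have hrpos : 0 < r by lra.
set c := ln T.
have hc : c = a + ln r by rewrite /c hTr ln_mult.
have hlnr : 2 * alpha * b <= ln r by rewrite -(ln_exp (2 * alpha * b)); apply: ln_le.
have hra : a * a <= r.
  apply: (Rle_trans _ (exp (2 * alpha * b))) => //.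
  have -> : a * a = exp (b + b) by rewrite exp_plus /b exp_ln; lra.
  apply: exp_le; nra.
set p := ps alpha s t.
have hp : p = (S * c - alpha * S * b) / T by [].
have hp0 : 0 <= p.
  rewrite hp; apply: div_ge0 => //.
  have : 0 <= S * (c - alpha * b) by apply: Rmult_le_pos; nra.
  lra.
have hp1 : p <= 1.
  rewrite hp; apply: (Rmult_le_reg_l T) => //.
  have -> : T * ((S * c - alpha * S * b) / T) = S * (c - alpha * b) by field; lra.
  have hlr := ln_half_le r hrpos.
  have : c - alpha * b <= r by nra.
  move=> h; have : S * (c - alpha * b) <= S * r by apply: Rmult_le_compat_l; lra.
  lra.
set k := Z.to_nat (Rceil a).
have hK : a <= INR k by apply: ceil_ge; lra.
have HB := probA_bound x gq hp0 hp1 (erefl k).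
apply: (Rle_lt_trans _ _ _ HB).
have hL : INR #|L| <= 16 * exp (2 * a + 2 * c).
  have hn := cardL_bound gq; have hp' := cardP_bound x gq.
  have hn2 : (#|L| <= s.+1 * (t.+1 * s.+1) * t.+1)%N.
    apply: (leq_trans hn); by rewrite leq_mul2r hp' orbT.
  apply: (Rle_trans _ (INR (s.+1 * (t.+1 * s.+1) * t.+1))); first by apply: le_INR; apply/leP.
  rewrite !mult_INR !S_INR -/S -/T.
  have -> : exp (2 * a + 2 * c) = S * S * (T * T).
    have -> : 2 * a + 2 * c = a + a + (c + c) by ring.
    by rewrite !exp_plus /a /c !exp_ln.
  have hS1 : 1 <= S by have := exp_ineq1_le A0; lra.
  have hT1 : 1 <= T by rewrite hTr; nra.
  have h1 : (S + 1) * ((T + 1) * (S + 1)) <= (2 * S) * ((2 * T) * (2 * S)).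
    apply: Rmult_le_compat; try nra.
  have h2 : (S + 1) * ((T + 1) * (S + 1)) * (T + 1) <= (2 * S) * ((2 * T) * (2 * S)) * (2 * T).
    apply: Rmult_le_compat; try nra.
  lra.
set K := INR k in hK *.
have hX1 : INR s.+1 ^ k <= exp (K * (ln 2 + a)).
  rewrite -exp_pow exp_plus /a exp_ln; last lra.
  rewrite exp_ln //.
  apply: pow_incr; rewrite S_INR -/S; split; [lra|].
  have := exp_ineq1_le A0; lra.
have hX2 : exp (- (K * ps alpha s t / INR s)) ^ t = exp (- (K * (c - alpha * b))).
  rewrite exp_pow -/T -/S -/p hp; congr exp; field; lra.
rewrite hX2.
have hE : 0 <= exp (- (K * (c - alpha * b))) by left; apply: exp_pos.
apply: (Rle_lt_trans _ (16 * exp (2 * a + 2 * c) * (exp (K * (ln 2 + a)) * exp (- (K * (c - alpha * b)))))).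
  apply: Rmult_le_compat => //; first by apply: pos_INR.
    apply: Rmult_le_pos => //; apply: pow_le; apply: pos_INR.
  apply: Rmult_le_compat_r => //.
rewrite -Rmult_assoc Rmult_assoc -!exp_plus.
have hln2 := ln2_lt1.
have hln2p : 0 < ln 2 by rewrite -ln_1; apply: ln_increasing; lra.
have hcab : a + 2 * alpha * b <= c by lra.
have hK2 : 2 <= K by lra.
have st1 : (2 - K) * c <= (2 - K) * (a + 2 * alpha * b).
  apply: Rmult_le_compat_neg_l; lra.
have hab : 12 <= alpha * b by nra.
have st2 : (ln 2 - alpha * b) * K <= (ln 2 - alpha * b) * a.
  apply: Rmult_le_compat_neg_l; lra.
have st3 : (4 - a) * (alpha * b) <= (4 - a) * 12.
  apply: Rmult_le_compat_neg_l; lra.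
have hY : 2 * a + 2 * c + (K * (ln 2 + a) + - (K * (c - alpha * b))) <= 48 - 7 * a.
  nra.
have hfin : exp (48 - 7 * a) < eps / 16.
  rewrite -(exp_ln (eps / 16)); last lra.
  apply: exp_increasing.
  have : (48 - ln (eps / 16)) / 7 + 1 <= a by lra.
  move=> h; have : 48 - ln (eps / 16) + 7 <= 7 * a.
    have := Rmult_le_compat_l 7 _ _ ltac:(lra) h; lra.
  lra.
have : exp (2 * a + 2 * c + (K * (ln 2 + a) + - (K * (c - alpha * b)))) <= exp (48 - 7 * a).
  exact: exp_le.
rewrite Rmult_assoc -exp_plus; lra.
Qed.
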